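(* Let $k\ge1$, $j\ge0$, $n=k+j$ and $N\in\mathcal{OC}_{k,j}$. Then $$\sum_{e\in \mathrm{ToT}(N)}A_C(N(e))=(2n+3)A_C(N)+(2n-1).$$
   Context: A (planted, binary) phylogenetic network on a taxon set $X$ with $|X|=n$ is a finite acyclic directed graph with: - a unique root $\rho$ of indegree 0 and outdegree 1; - exactly $n$ nodes of indegree 1 and outdegree 0 (leaves), labeled bijectively by $X$; - every other node is either a tree node (indegree 1, outdegree 2) or a reticulation node (indegree 2, outdegree 1). An edge $(p,q)$ is a tree edge if $q$ is a tree node or a leaf. A network is simplex if the child of every reticulation node is a leaf. A node $u$ is an ancestor of a node $v\neq u$ if some directed path from $\rho$ to $v$ passes through $u$. The ancestor number $\alpha_N(v)$ is the number of ancestors of $v$. The top tree component $C(N)$ of a simplex network $N$ is the set of tree nodes and leaves not descending from any reticulation node. Define $A_C(N)=\sum_{v\in C(N)}\alpha_N(v)$. $\mathrm{ToT}(N)$ is the set of tree edges $(u,v)$ of $N$ with $u$ not a reticulation node, i.e. the tree edges of the top tree component. For $k\ge1$, $j\ge0$, $\mathcal{OC}_{k,j}$ is the set of simplex networks on taxa $\{1,\dots,k+j\}$ with exactly $j$ reticulation nodes, whose children are the leaves $k+1,\dots,k+j$. For $N\in\mathcal{OC}_{k,j}$ and $e=(u,v)\in\mathrm{ToT}(N)$, the network $N(e)$ is obtained from $N$ as follows: - subdivide $e$ into the path $(u,p),(p,q),(q,v)$ with new nodes $p,q$; - add a new reticulation node $r$ with edges $(p,r),(q,r)$; - add a new leaf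 labeled $n+1$ with edge $(r,n+1)$. *)

(* Defs.v *)
From mathcomp Require Import all_boot.
Set Implicit Arguments. Unset Strict Implicit. Unset Printing Implicit Defensive.

(* A (candidate) network: nodes are 0 .. nn-1, root rt, directed edge list E,
   and a labelling lab (only meaningful on leaves). *)
Record net := Net { nn : nat; rt : nat; E : seq (nat * nat); lab : nat -> nat }.

Definition indeg (N : net) (v : nat) := count (fun e => e.2 == v) (E N).
Definition outdeg (N : net) (v : nat) := count (fun e => e.1 == v) (E N).
Definition is_leaf N v := (indeg N v == 1) && (outdeg N v == 0).
Definition is_tree N v := (indeg N v == 1) && (outdeg N v == 2).
Definition is_ret  N v := (indeg N v == 2) && (outdeg N v == 1).

Definition erel (N : net) : rel 'I_(nn N) := fun x y => (val x, val y) \in E N.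

(* planted binary phylogenetic network on taxa {1,...,n} *)
Definition is_network (N : net) (n : nat) : Prop :=
  [/\ [/\ rt N < nn N, uniq (E N),
      all (fun e => (e.1 < nn N) && (e.2 < nn N)) (E N) &
      indeg N (rt N) = 0 /\ outdeg N (rt N) = 1],
      (forall v, v < nn N -> v != rt N ->
         [|| is_leaf N v, is_tree N v | is_ret N v]),
      (forall x y : 'I_(nn N), erel x y -> ~~ connect (@erel N) y x) &
      [/\ (forall u v, u < nn N -> v < nn N -> is_leaf N u -> is_leaf N v ->
             lab N u = lab N v -> u = v),
          (forall v, v < nn N -> is_leaf N v -> 1 <= lab N v <= n) &
          (forall x, 1 <= x <= n -> exists v, [/\ v < nn N, is_leaf N v & lab N v = x])]].

Definition is_simplex (N : net) : Prop :=
  forall r c, is_ret N r -> (r, c) \in E N -> is_leaf N c.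

Definition OC (k j : nat) (N : net) : Prop :=
  [/\ is_network N (k + j), is_simplex N,
      count (is_ret N) (iota 0 (nn N)) = j &
      (forall r c, r < nn N -> is_ret N r -> (r, c) \in E N -> k < lab N c <= k + j)].

Definition anc (N : net) (u v : 'I_(nn N)) : bool :=
  [&& u != v, [exists x : 'I_(nn N), (val x == rt N) && connect (@erel N) x u]
    & connect (@erel N) u v].

Definition alpha (N : net) (v : 'I_(nn N)) : nat := #|[set u | anc u v]|.

Definition inC (N : net) (v : 'I_(nn N)) : bool :=
  (is_tree N v || is_leaf N v) && ~~ [exists r : 'I_(nn N), is_ret N r && anc r v].

Definition A_C (N : net) : nat := \sum_(v : 'I_(nn N) | inC v) alpha v.

Definition ToT (N : net) : seq (nat * nat) :=
  [seq e <- E N | (is_tree N e.2 || is_leaf N e.2) && ~~ is_ret N e.1].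

(* N(e), where n is the number of taxa of N; new nodes p = nn, q = nn+1,
   r = nn+2, new leaf nn+3 labelled n+1 *)
Definition extend (N : net) (n : nat) (e : nat * nat) : net :=
  let p := nn N in let q := (nn N).+1 in let r := (nn N).+2 in let l := (nn N).+3 in
  Net (nn N).+4 (rt N)
      ([:: (e.1, p); (p, q); (q, e.2); (p, r); (q, r); (r, l)] ++ rem e (E N))
      (fun x => if x == l then n.+1 else lab N x).

(* Main.v *)
Require Import Defs.
From mathcomp Require Import all_boot zify.
Set Implicit Arguments. Unset Strict Implicit. Unset Printing Implicit Defensive.


Lemma my_connect_map (T T' : finType) (e : rel T) (e' : rel T') (f : T -> T') :
  (forall x y, e x y -> connect e' (f x) (f y)) ->
  forall x y, connect e x y -> connect e' (f x) (f y).
Proof.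
move=> H x y /connectP [p]; elim: p x => [|z p IH] x /=; first by move=> _ ->.
case/andP=> exz pz ly; exact: connect_trans (H _ _ exz) (IH _ pz ly).
Qed.

Lemma my_connect_closed (T : finType) (e : rel T) (S : pred T) :
  (forall x y, e x y -> S x -> S y) -> forall x y, connect e x y -> S x -> S y.
Proof.
move=> H x y /connectP [p]; elim: p x => [|z p IH] x /=; first by move=> _ ->.
case/andP=> exz pz ly Sx; exact: IH _ pz ly (H _ _ exz Sx).
Qed.

Lemma my_connect_last (T : finType) (e : rel T) x y :
  connect e x y -> x != y -> exists2 z, connect e x z & e z y.
Proof.
move=> /connectP [p]; elim/last_ind: p => [|p z _] /=; first by move=> _ ->; rewrite eqxx.
rewrite rcons_path last_rcons => /andP [px ez] -> _; exists (last x p) => //.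
by apply/connectP; exists p.
Qed.

Lemma my_connect_first (T : finType) (e : rel T) x y :
  connect e x y -> x != y -> exists2 z, e x z & connect e z y.
Proof.
move=> /connectP [[|z p]] /=; first by move=> _ ->; rewrite eqxx.
case/andP=> exz pz ly _; exists z => //; apply/connectP; by exists p.
Qed.

Lemma count_one_uniq (T : eqType) (p : pred T) (s : seq T) x y :
  count p s = 1 -> x \in s -> y \in s -> p x -> p y -> x = y.
Proof.
elim: s => [|z s IH] //=; rewrite !in_cons.
case: (boolP (p z)) => pz /=.
  move=> [] /eqP; rewrite -leqn0 leqNgt -has_count => /hasPn hs.
  case/orP=> [/eqP ->|xs]; case/orP=> [/eqP ->|ys] //.
  - by move=> _ py; move: (hs _ ys); rewrite py.
  - by move=> px; move: (hs _ xs); rewrite px.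
  - by move=> px; move: (hs _ xs); rewrite px.
rewrite add0n => c1; case/orP=> [/eqP ->|xs]; first by rewrite (negbTE pz).
case/orP=> [/eqP ->|ys]; last exact: IH.
by move=> _; rewrite (negbTE pz).
Qed.

Lemma count_split (T : Type) (a b : pred T) (s : seq T) :
  count a s = count (fun x => a x && b x) s + count (fun x => a x && ~~ b x) s.
Proof. elim: s => //= x s ->; case: (a x); case: (b x) => /=; lia. Qed.

Lemma sum_eq1 m x (h : nat -> nat) : x < m ->
  \sum_(0 <= w < m) (x == w) * h w = h x.
Proof.
move=> xm; rewrite big_mkord (bigD1 (Ordinal xm)) //= eqxx mul1n big1 ?addn0 //.
move=> i; rewrite -val_eqE /= eq_sym => /negbTE ->; by rewrite mul0n.
Qed.

Lemma sum_by (s : seq (nat * nat)) m (f : nat * nat -> nat) (P : pred (nat * nat)) h :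
  all (fun e => f e < m) s ->
  \sum_(e <- s | P e) h (f e) = \sum_(0 <= w < m) count (fun e => (f e == w) && P e) s * h w.
Proof.
elim: s => [|x s IH] /=.
  by rewrite big_nil big1 // => i _; rewrite mul0n.
case/andP=> xm /IH {}IH; rewrite big_cons IH.
under [X in _ = X]eq_bigr do rewrite mulnDl.
rewrite big_split /=; case: (P x).
  congr (_ + _); rewrite -(sum_eq1 h xm); apply: eq_bigr => i _; by rewrite andbT.
by rewrite [X in _ = X + _]big1 ?add0n // => i _; rewrite andbF mul0n.
Qed.

Lemma sum_count (T : Type) (s : seq T) (b : pred T) : \sum_(w <- s) (b w : nat) = count b s.
Proof. by elim: s => [|x s IH]; rewrite ?big_nil ?big_cons ?IH. Qed.

Lemma sum_count_nat m (b : pred nat) : \sum_(0 <= w < m) (b w : nat) = count b (iota 0 m).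
Proof. by rewrite /index_iota subn0 sum_count. Qed.


Definition cn (G : net) (x y : nat) : bool :=
  [exists i : 'I_(nn G), exists j : 'I_(nn G),
     [&& val i == x, val j == y & connect (@erel G) i j]].

Lemma cnP G x y : reflect (exists i j : 'I_(nn G),
   [/\ val i = x, val j = y & connect (@erel G) i j]) (cn G x y).
Proof.
apply: (iffP existsP) => [[i /existsP [j /and3P [/eqP hi /eqP hj c]]]|[i [j [hi hj c]]]].
  by exists i, j.
by exists i; apply/existsP; exists j; rewrite hi hj !eqxx.
Qed.

Lemma cnE G (i j : 'I_(nn G)) : cn G i j = connect (@erel G) i j.
Proof.
apply/cnP/idP => [[i' [j' [/val_inj -> /val_inj -> //]]]|c]; by exists i, j.
Qed.

Lemma cn_lt G x y : cn G x y -> x < nn G /\ y < nn G.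
Proof. move=> /cnP [i [j [hi hj _]]]; rewrite -hi -hj; split; apply: ltn_ord. Qed.

Lemma cn_refl G x : x < nn G -> cn G x x.
Proof. move=> h; by rewrite -[x]/(val (Ordinal h)) cnE connect0. Qed.

Lemma cn_trans G x y z : cn G x y -> cn G y z -> cn G x z.
Proof.
case/cnP=> i [j [<- <- c1]] /cnP [j' [k [/val_inj e <- c2]]].
by rewrite cnE (connect_trans c1) // -e.
Qed.

Lemma cn_edge G x y : (x, y) \in E G -> x < nn G -> y < nn G -> cn G x y.
Proof.
move=> h hx hy; rewrite -[x]/(val (Ordinal hx)) -[y]/(val (Ordinal hy)) cnE.
by apply: connect1.
Qed.

Lemma cn_map G G' (f : nat -> nat) : (forall x, x < nn G -> f x < nn G') ->
  (forall x y, (x, y) \in E G -> x < nn G -> y < nn G -> cn G' (f x) (f y)) ->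
  forall x y, cn G x y -> cn G' (f x) (f y).
Proof.
move=> hf he x y /cnP [i [j [<- <- c]]].
pose F (u : 'I_(nn G)) : 'I_(nn G') := Ordinal (hf _ (ltn_ord u)).
rewrite -[f i]/(val (F i)) -[f j]/(val (F j)) cnE.
apply: (my_connect_map _ c) => u v h; rewrite -cnE /=; exact: he h (ltn_ord u) (ltn_ord v).
Qed.

Lemma cn_closed G (S : pred nat) : (forall x y, (x, y) \in E G -> S x -> S y) ->
  forall x y, cn G x y -> S x -> S y.
Proof.
move=> hS x y /cnP [i [j [<- <- c]]].
have H : forall u v : 'I_(nn G), erel u v -> S u -> S v by move=> u v; apply: hS.
move=> Si; exact (@my_connect_closed _ _ (fun u : 'I_(nn G) => S (val u)) H i j c Si).
Qed.

Lemma cn_last G x y : cn G x y -> x != y -> exists z, cn G x z /\ (z, y) \in E G.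
Proof.
case/cnP=> i [j [<- <- c]] ne; case: (my_connect_last c ne) => z cz ez.
by exists (val z); rewrite cnE.
Qed.

Lemma cn_first G x y : cn G x y -> x != y -> exists z, (x, z) \in E G /\ cn G z y.
Proof.
case/cnP=> i [j [<- <- c]] ne; case: (my_connect_first c ne) => z ez cz.
by exists (val z); rewrite cnE.
Qed.

Definition TL G v := is_tree G v || is_leaf G v.
Definition inCn G v := TL G v &&
  ~~ has (fun r => [&& is_ret G r, r != v & cn G r v]) (iota 0 (nn G)).
Definition F1 G := forall v, v < nn G -> cn G (rt G) v.

Lemma ancE G (F : F1 G) (u v : 'I_(nn G)) : anc u v = (val u != val v) && cn G u v.
Proof.
rewrite /anc cnE; have -> : (u != v) = (val u != val v) by [].
case: (connect _ u v); last by rewrite !andbF.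
rewrite !andbT; case: (val u != val v) => //=.
case/cnP: (F _ (ltn_ord u)) => i [j [hi /val_inj e c]]; apply/existsP; exists i.
by rewrite hi eqxx -e.
Qed.

Lemma alphaE G (F : F1 G) (v : 'I_(nn G)) :
  alpha v = \sum_(0 <= u < nn G) ((u != val v) && cn G u v).
Proof.
rewrite /alpha -sum1_card big_mkcond big_mkord; apply: eq_bigr => u _.
by rewrite inE ancE //; case: (_ && _).
Qed.

Lemma inCE G (F : F1 G) (v : 'I_(nn G)) : inC v = inCn G v.
Proof.
rewrite /inC /inCn; congr (_ && ~~ _).
apply/existsP/hasP => [[r /andP [hr a]]|[r]].
  exists (val r); first by rewrite mem_iota /= ltn_ord.
  by move: a; rewrite hr ancE.
rewrite mem_iota /= => rlt /and3P [hr ne c]; exists (Ordinal rlt); rewrite hr ancE //= ne.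
by rewrite -[v in cn G _ v]/(val v).
Qed.

Lemma A_CE G (F : F1 G) : A_C G =
  \sum_(0 <= v < nn G) inCn G v * \sum_(0 <= u < nn G) ((u != v) && cn G u v).
Proof.
rewrite /A_C big_mkcond big_mkord; apply: eq_bigr => v _.
by rewrite inCE // alphaE //; case: (inCn G v) => //=; rewrite mul1n.
Qed.


Lemma outdeg_pos G x y : (x, y) \in E G -> 0 < outdeg G x.
Proof. move=> h; rewrite /outdeg -has_count; apply/hasP; by exists (x, y). Qed.

Lemma indeg_pos G x y : (x, y) \in E G -> 0 < indeg G y.
Proof. move=> h; rewrite /indeg -has_count; apply/hasP; by exists (x, y). Qed.

Lemma indeg_has G y : 0 < indeg G y -> exists x, (x, y) \in E G.
Proof. rewrite /indeg -has_count => /hasP [[x y'] h /= /eqP <-]; by exists x. Qed.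

Lemma excl G v : is_leaf G v + is_tree G v + is_ret G v <= 1.
Proof.
rewrite /is_leaf /is_tree /is_ret.
case: (indeg G v) => [|[|[|i]]]; case: (outdeg G v) => [|[|[|o]]] //.
Qed.

Section NetFacts.
Variables (k j : nat) (N : net).
Hypothesis HOC : OC k j N.

Lemma netN : is_network N (k + j). Proof. by case: HOC. Qed.
Lemma rt_lt : rt N < nn N. Proof. by case: netN => [[]]. Qed.
Lemma Euniq : uniq (E N). Proof. by case: netN => [[]]. Qed.
Lemma Eall_ : all (fun e => (e.1 < nn N) && (e.2 < nn N)) (E N). Proof. by case: netN => [[]]. Qed.
Lemma Eall x y : (x, y) \in E N -> x < nn N /\ y < nn N.
Proof. by move=> h; move/allP: Eall_ => /(_ _ h) /andP. Qed.
Lemma Eall1 : all (fun e => e.1 < nn N) (E N).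
Proof. by apply/allP => -[x y] /Eall []. Qed.
Lemma Eall2 : all (fun e => e.2 < nn N) (E N).
Proof. by apply/allP => -[x y] /Eall []. Qed.
Lemma indeg_rt : indeg N (rt N) = 0. Proof. by case: netN => [[_ _ _ []]]. Qed.
Lemma outdeg_rt : outdeg N (rt N) = 1. Proof. by case: netN => [[_ _ _ []]]. Qed.
Lemma classif v : v < nn N -> v != rt N -> [|| is_leaf N v, is_tree N v | is_ret N v].
Proof. by case: netN => _ h _ _; apply: h. Qed.
Lemma acyc x y : (x, y) \in E N -> ~~ cn N y x.
Proof.
case: netN => _ _ h _ xy; case: (Eall xy) => hx hy.
rewrite -[x]/(val (Ordinal hx)) -[y]/(val (Ordinal hy)) cnE; exact: h.
Qed.
Lemma simplexN r c : is_ret N r -> (r, c) \in E N -> is_leaf N c.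
Proof. by case: HOC => _ h _ _; apply: h. Qed.
Lemma count_ret : count (is_ret N) (iota 0 (nn N)) = j.
Proof. by case: HOC. Qed.

Lemma indeg_pos_cl v : v < nn N -> v != rt N -> 0 < indeg N v.
Proof.
move=> h1 h2; move: (classif h1 h2); rewrite /is_leaf /is_tree /is_ret.
by case: (indeg N v) => [|[|[|i]]] //=; rewrite !andFb.
Qed.

Lemma F1N : F1 N.
Proof.
move=> v0 vlt; pose v := Ordinal vlt.
pose D (x : 'I_(nn N)) := #|[set y | connect (@erel N) x y]|.
case: (@arg_maxnP _ v (fun x => connect (@erel N) x v) D (connect0 _ _)) => x0 Sx0 mx.
suff e : val x0 = rt N by rewrite -e -[v0]/(val v) cnE.
apply/eqP/negPn/negP => ne.
case: (indeg_has (indeg_pos_cl (ltn_ord x0) ne)) => y hy.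
case: (Eall hy) => ylt _; pose y' := Ordinal ylt.
have ey : erel y' x0 by [].
have Sy : connect (@erel N) y' v by apply: connect_trans (connect1 ey) Sx0.
have := mx _ Sy; rewrite /geq /= leqNgt => /negP; apply; apply: proper_card.
apply/properP; split.
  by apply/subsetP => z; rewrite !inE => cz; apply: connect_trans (connect1 ey) cz.
exists y'; rewrite !inE ?connect0 //.
move: (acyc hy); by rewrite -[y]/(val y') cnE.
Qed.

Lemma deg_in v : v < nn N -> indeg N v = is_leaf N v + is_tree N v + 2 * is_ret N v.
Proof.
move=> vlt; case: (eqVneq v (rt N)) => [->|ne].
  by rewrite /is_leaf /is_tree /is_ret indeg_rt.
move: (classif vlt ne) (excl N v); rewrite /is_leaf /is_tree /is_ret.
case: (indeg N v) => [|[|[|i]]]; case: (outdeg N v) => [|[|[|o]]] //.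
Qed.

Lemma deg_out v : v < nn N -> outdeg N v = (v == rt N) + 2 * is_tree N v + is_ret N v.
Proof.
move=> vlt; case: (eqVneq v (rt N)) => [->|ne].
  by rewrite /is_leaf /is_tree /is_ret indeg_rt outdeg_rt.
move: (classif vlt ne) (excl N v); rewrite /is_leaf /is_tree /is_ret.
case: (indeg N v) => [|[|[|i]]]; case: (outdeg N v) => [|[|[|o]]] //.
Qed.

Lemma ret_reach r y : is_ret N r -> cn N r y -> r != y -> (r, y) \in E N /\ is_leaf N y.
Proof.
move=> hr c ne; case: (cn_first c ne) => z [ez cz].
have lz := simplexN hr ez.
case: (eqVneq z y) => [<- //|nz].
case: (cn_first cz nz) => w [ew _].
by move: lz (outdeg_pos ew); rewrite /is_leaf => /andP [_ /eqP ->].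
Qed.

End NetFacts.


Definition ToTp (N : net) (e : nat * nat) :=
  (is_tree N e.2 || is_leaf N e.2) && ~~ is_ret N e.1.

Lemma ret_notTL G v : is_ret G v -> TL G v = false.
Proof. move=> h; move: (excl G v); rewrite h /TL; case: (is_leaf G v); case: (is_tree G v) => //. Qed.

Lemma TL_in1 G v : TL G v -> indeg G v = 1.
Proof. by rewrite /TL /is_tree /is_leaf => /orP [] /andP [/eqP]. Qed.

Lemma sum_split1 m x (b : pred nat) : x < m -> b x ->
  \sum_(0 <= w < m) (b w : nat) = \sum_(0 <= w < m) ((w != x) && b w) + 1.
Proof.
move=> xm bx; rewrite -[1 in RHS](_ : (b x : nat) = 1); last by rewrite bx.
rewrite -(sum_eq1 (fun w => (b w : nat)) xm) -big_split /=.
apply: eq_bigr => w _; case: (eqVneq x w) => [<-|ne]; first by rewrite bx.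
by rewrite mul0n addn0.
Qed.

Section NetFacts2.
Variables (k j : nat) (N : net).
Hypothesis HOC : OC k j N.

Lemma hasRA_intro r v : r < nn N -> is_ret N r -> r != v -> cn N r v ->
  has (fun r => [&& is_ret N r, r != v & cn N r v]) (iota 0 (nn N)).
Proof. move=> rl hr ne c; apply/hasP; exists r; first by rewrite mem_iota add0n rl. by rewrite hr ne c. Qed.

Lemma count_ToT w : w < nn N ->
  count (fun e => (e.2 == w) && ToTp N e) (E N) = inCn N w.
Proof.
move=> wl; rewrite /inCn; case TLw: (TL N w) => /=; last first.
  apply/eqP; rewrite -leqn0 leqNgt -has_count; apply/hasPn => -[x y] _ /=.
  by rewrite /ToTp /=; case: (y =P w) => [->|] //=; move: TLw; rewrite /TL => ->.
case H: (has _ _) => /=.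
  case/hasP: H => r; rewrite mem_iota => /andP [_ rl] /and3P [hr ne c].
  case: (ret_reach HOC hr c ne) => rw _.
  apply/eqP; rewrite -leqn0 leqNgt -has_count; apply/hasPn => -[x y] xy /=.
  apply/negP => /andP [/eqP yw]; subst y.
  have := count_one_uniq (p := fun e : nat * nat => e.2 == w) (TL_in1 TLw) xy rw.
  by rewrite !eqxx => /(_ isT isT) [->]; rewrite /ToTp /= hr andbF.
rewrite -(TL_in1 TLw) /indeg; apply: eq_in_count => -[x y] xy /=.
case: (y =P w) => [yw|] //=; subst y; rewrite /ToTp /=.
rewrite -/(TL N w) TLw /=; apply/negP => hx.
case: (Eall HOC xy) => xl _.
have xw : x != w by apply/eqP => e; subst x; rewrite (ret_notTL hx) in TLw.
move/negbT: H; rewrite (hasRA_intro xl hx xw) //; apply: cn_edge => //; apply: (Eall HOC xy).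
Qed.


Lemma sum_ToT (h : nat -> nat) :
  \sum_(e <- ToT N) h e.2 = \sum_(0 <= w < nn N) inCn N w * h w.
Proof.
rewrite big_filter (sum_by _ _ (Eall2 HOC)); apply: eq_big_nat => w /andP [_ wl].
by rewrite -(count_ToT wl).
Qed.

Lemma leaf_count : count (is_leaf N) (iota 0 (nn N)) = k + j.
Proof.
case: (netN HOC) => _ _ _ [linj lrange lsurj].
set s := [seq v <- iota 0 (nn N) | is_leaf N v].
have sP v : v \in s = (v < nn N) && is_leaf N v.
  by rewrite mem_filter mem_iota add0n andbC.
have us : uniq [seq lab N v | v <- s].
  rewrite map_inj_in_uniq ?filter_uniq ?iota_uniq // => u v.
  rewrite !sP => /andP [ul lu] /andP [vl lv]; exact: linj.
rewrite -size_filter -/s -(size_map (lab N)); apply/eqP; rewrite eqn_leq; apply/andP; split.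
  rewrite -(size_iota 1 (k + j)); apply: uniq_leq_size => // x /mapP [v].
  rewrite sP => /andP [vl lv] ->; rewrite mem_iota; move: (lrange _ vl lv); lia.
rewrite -{1}(size_iota 1 (k + j)); apply: uniq_leq_size; first exact: iota_uniq.
move=> x; rewrite mem_iota => hx; case: (lsurj x) => [|v [vl lv <-]]; first lia.
by apply: map_f; rewrite sP vl lv.
Qed.

Lemma sum_in (h : nat -> nat) :
  \sum_(e <- E N) h e.2 = \sum_(0 <= w < nn N) indeg N w * h w.
Proof.
rewrite -(big_filter _ predT) filter_predT.
rewrite -[LHS](big_filter _ predT) filter_predT.
rewrite (sum_by _ _ (Eall2 HOC)); apply: eq_big_nat => w _.
by congr (_ * _); apply: eq_count => e; rewrite andbT.
Qed.

Lemma sum_out (h : nat -> nat) :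
  \sum_(e <- E N) h e.1 = \sum_(0 <= w < nn N) outdeg N w * h w.
Proof.
rewrite -[LHS](big_filter _ predT) filter_predT.
rewrite (sum_by _ _ (Eall1 HOC)); apply: eq_big_nat => w _.
by congr (_ * _); apply: eq_count => e; rewrite andbT.
Qed.

Lemma size_ToT : size (ToT N) = 2 * (k + j) - 1.
Proof.
set L := count (is_leaf N) (iota 0 (nn N)).
set T := count (is_tree N) (iota 0 (nn N)).
set R := count (is_ret N) (iota 0 (nn N)).
have hL : L = k + j by apply: leaf_count.
have hR : R = j by exact: (count_ret HOC).
have sz1 : size (E N) = L + T + 2 * R.
  rewrite -sum1_size (sum_in (fun _ => 1)).
  rewrite (eq_big_nat _ _ (F2 := fun w => is_leaf N w + is_tree N w + 2 * is_ret N w)); last first.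
    by move=> w /andP [_ wl]; rewrite muln1 (deg_in HOC).
  rewrite !big_split /= big1_eq (sum_count_nat _ (is_leaf N)) (sum_count_nat _ (is_tree N)) (sum_count_nat _ (is_ret N)) -/L -/T -/R; lia.
have sz2 : size (E N) = 1 + 2 * T + R.
  rewrite -sum1_size (sum_out (fun _ => 1)).
  rewrite (eq_big_nat _ _ (F2 := fun w => (rt N == w) * 1 + 2 * is_tree N w + is_ret N w)); last first.
    by move=> w /andP [_ wl]; rewrite (deg_out HOC) // (eq_sym (rt N)) muln1 muln1.
  rewrite !big_split /= big1_eq (sum_eq1 (fun _ => 1) (rt_lt HOC)) (sum_count_nat _ (is_tree N)) (sum_count_nat _ (is_ret N)) -/T -/R; lia.
have c1 : count (fun e => TL N e.2) (E N) = L + T.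
  rewrite -sum_count (sum_in (fun w => TL N w)).
  rewrite (eq_big_nat _ _ (F2 := fun w => is_leaf N w + is_tree N w)); last first.
    move=> w /andP [_ wl]; rewrite (deg_in HOC) // /TL; move: (excl N w).
    by case: (is_leaf N w); case: (is_tree N w); case: (is_ret N w).
  by rewrite big_split /= (sum_count_nat _ (is_leaf N)) (sum_count_nat _ (is_tree N)).
have c2 : count (fun e => is_ret N e.1) (E N) = R.
  rewrite -sum_count (sum_out (fun w => is_ret N w)).
  rewrite (eq_big_nat _ _ (F2 := fun w => is_ret N w : nat)); last first.
    move=> w /andP [_ wl]; rewrite (deg_out HOC) //; move: (excl N w).
    case hr: (is_ret N w); last by rewrite !muln0.
    have -> : (w == rt N) = false by apply/negbTE/eqP => e; move: hr; rewrite e /is_ret (indeg_rt HOC).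
    by case: (is_leaf N w); case: (is_tree N w).
  by rewrite sum_count_nat.
have c3 : count (fun e => TL N e.2 && is_ret N e.1) (E N) = R.
  rewrite -c2; apply: eq_in_count => -[x y] xy /=.
  case hx: (is_ret N x); rewrite ?andbT ?andbF //.
  by rewrite /TL (simplexN HOC hx xy) orbT.
rewrite (count_split _ (fun e => is_ret N e.1)) c3 in c1.
rewrite /ToT size_filter.
have -> : count (ToTp N) (E N) = count (fun e => TL N e.2 && ~~ is_ret N e.1) (E N) by [].
lia.
Qed.

Lemma alpha_par a w : (a, w) \in ToT N ->
  \sum_(0 <= u < nn N) (cn N u a : nat) = \sum_(0 <= u < nn N) ((u != w) && cn N u w).
Proof.
rewrite mem_filter => /andP [/andP [TLw _] aw] /=.
have TLw' : TL N w := TLw.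
have i1 := TL_in1 TLw'.
case: (Eall HOC aw) => al wl.
apply: eq_big_nat => u /andP [_ ul]; congr nat_of_bool.
apply/idP/andP => [c|[ne c]].
  split; last by apply: cn_trans c (cn_edge aw al wl).
  by apply/eqP => e; subst u; move: (acyc HOC aw); rewrite c.
case: (cn_last c ne) => z [cz zw].
have := count_one_uniq (p := fun e : nat * nat => e.2 == w) i1 zw aw.
by rewrite !eqxx => /(_ isT isT) [<-].
Qed.

Lemma inner_C v : v < nn N -> inCn N v ->
  \sum_(0 <= w < nn N) inCn N w * cn N w v = \sum_(0 <= u < nn N) ((u != v) && cn N u v).
Proof.
move=> vl /andP [TLv nhv].
rewrite (eq_big_nat _ _ (F2 := fun w => ((w != rt N) && cn N w v : nat))); last first.
  move=> w /andP [_ wl]; case cw: (cn N w v); rewrite ?muln0 ?andbF //= muln1.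
  case: (eqVneq w (rt N)) => [->|ne] /=.
    by rewrite /inCn /TL /is_tree /is_leaf (indeg_rt HOC).
  have nrw : ~~ is_ret N w.
    apply/negP => rw; have wv : w != v by apply/eqP => e; subst w; rewrite (ret_notTL rw) in TLv.
    by move: nhv; rewrite (hasRA_intro wl rw wv cw).
  have TLw : TL N w.
    by move: (classif HOC wl ne) nrw; rewrite /TL; case: (is_leaf N w); case: (is_tree N w); case: (is_ret N w).
  rewrite /inCn TLw /= (_ : has _ _ = false) //; apply/negP => /hasP [r]; rewrite mem_iota => /andP [_ rl] /and3P [hr rw c].
  have rv : r != v by apply/eqP => e; subst r; rewrite (ret_notTL hr) in TLv.
  by move: nhv; rewrite (hasRA_intro rl hr rv (cn_trans c cw)).
apply/eqP; rewrite -(eqn_add2r 1).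
rewrite -(@sum_split1 (nn N) (rt N) (fun u => cn N u v) (rt_lt HOC) (F1N HOC vl)).
by rewrite -(@sum_split1 (nn N) v (fun u => cn N u v) vl (cn_refl vl)).
Qed.

End NetFacts2.


Section Ext.
Variables (k j : nat) (N : net) (a b : nat).
Hypothesis HOC : OC k j N.
Hypothesis Hab : (a, b) \in ToT N.
Local Notation M := (extend N (k + j) (a, b)).
Local Notation m := (nn N).

Lemma abE : (a, b) \in E N. Proof. by move: Hab; rewrite mem_filter => /andP []. Qed.
Lemma a_nret : ~~ is_ret N a. Proof. by move: Hab; rewrite mem_filter => /andP [/andP []]. Qed.
Lemma b_TL : TL N b. Proof. by move: Hab; rewrite mem_filter => /andP [/andP []]. Qed.
Lemma a_lt : a < m. Proof. by case: (Eall HOC abE). Qed.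
Lemma b_lt : b < m. Proof. by case: (Eall HOC abE). Qed.

Lemma EM : E M = [:: (a, m); (m, m.+1); (m.+1, b); (m, m.+2); (m.+1, m.+2); (m.+2, m.+3)]
   ++ rem (a, b) (E N).
Proof. by []. Qed.
Lemma nnM : nn M = m.+4. Proof. by []. Qed.
Lemma rtM : rt M = rt N. Proof. by []. Qed.

Lemma count_rem (p : pred (nat * nat)) : count p (E N) = p (a, b) + count p (rem (a, b) (E N)).
Proof. by rewrite (permP (perm_to_rem abE)) /=. Qed.

Lemma indeg_big x : m <= x -> indeg N x = 0.
Proof.
move=> h; apply/eqP; rewrite -leqn0 leqNgt -has_count; apply/hasPn => -[u v] /(Eall HOC) [_ vl] /=.
by apply/eqP => e; subst v; move: (leq_trans vl h); rewrite ltnn.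
Qed.
Lemma outdeg_big x : m <= x -> outdeg N x = 0.
Proof.
move=> h; apply/eqP; rewrite -leqn0 leqNgt -has_count; apply/hasPn => -[u v] /(Eall HOC) [ul _] /=.
by apply/eqP => e; subst u; move: (leq_trans ul h); rewrite ltnn.
Qed.

Lemma indegM x : indeg M x = (m == x) + (m.+1 == x) + (b == x) + 2 * (m.+2 == x) + (m.+3 == x)
   + (indeg N x - (b == x)).
Proof.
have := count_rem (fun e => e.2 == x); rewrite /indeg /= => ->; lia.
Qed.
Lemma outdegM x : outdeg M x = (a == x) + 2 * (m == x) + 2 * (m.+1 == x) + (m.+2 == x)
   + (outdeg N x - (a == x)).
Proof.
have := count_rem (fun e => e.1 == x); rewrite /outdeg /= => ->; lia.
Qed.

Lemma degM_old x : x < m -> indeg M x = indeg N x /\ outdeg M x = outdeg N x.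
Proof.
move=> xl; rewrite indegM outdegM; split.
  have := b_lt; have := indeg_pos abE; case: (eqVneq b x) => [<-|] /=; lia.
have := a_lt; have := outdeg_pos abE; case: (eqVneq a x) => [<-|] /=; lia.
Qed.

Lemma typesM_old x : x < m ->
  [/\ is_tree M x = is_tree N x, is_leaf M x = is_leaf N x & is_ret M x = is_ret N x].
Proof. by move=> /degM_old [hi ho]; rewrite /is_tree /is_leaf /is_ret hi ho. Qed.

Lemma TLM_old x : x < m -> TL M x = TL N x.
Proof. by case/typesM_old => h1 h2 _; rewrite /TL h1 h2. Qed.

Lemma degM_new :
  [/\ indeg M m = 1 /\ outdeg M m = 2, indeg M m.+1 = 1 /\ outdeg M m.+1 = 2,
      indeg M m.+2 = 2 /\ outdeg M m.+2 = 1 & indeg M m.+3 = 1 /\ outdeg M m.+3 = 0].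
Proof.
have bl := b_lt; have al := a_lt.
have i0 : forall d, indeg N (m + d) = 0 by move=> d; apply: indeg_big; apply: leq_addr.
have o0 : forall d, outdeg N (m + d) = 0 by move=> d; apply: outdeg_big; apply: leq_addr.
move: (i0 0) (i0 1) (i0 2) (i0 3) (o0 0) (o0 1) (o0 2) (o0 3).
rewrite addn0 addn1 addn2 addn3 !indegM !outdegM => *.
repeat split; lia.
Qed.

Lemma EM_ind (P : nat -> nat -> Prop) :
  P a m -> P m m.+1 -> P m.+1 b -> P m m.+2 -> P m.+1 m.+2 -> P m.+2 m.+3 ->
  (forall x y, (x, y) \in E N -> (x, y) != (a, b) -> P x y) ->
  forall x y, (x, y) \in E M -> P x y.
Proof.
move=> h1 h2 h3 h4 h5 h6 h7 x y; rewrite EM mem_cat.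
case/orP => [|h]; last by move: h; rewrite (mem_rem_uniq _ (Euniq HOC)) inE => /andP [ne h]; apply: h7.
rewrite !inE.
by do 5 (case/orP => [/eqP [-> ->] //|]); move/eqP => [-> ->].
Qed.

Lemma eM x y : (x, y) \in [:: (a, m); (m, m.+1); (m.+1, b); (m, m.+2); (m.+1, m.+2); (m.+2, m.+3)] ->
  (x, y) \in E M.
Proof. by move=> h; rewrite EM mem_cat h. Qed.

Lemma cnM_edge x y : (x, y) \in [:: (a, m); (m, m.+1); (m.+1, b); (m, m.+2); (m.+1, m.+2); (m.+2, m.+3)] ->
  cn M x y.
Proof.
move=> h; have bl := b_lt; have al := a_lt.
apply: cn_edge; first exact: eM.
  by move: h; rewrite !inE nnM; do 5 (case/orP => [/eqP [-> _]|]; first lia); move/eqP => [-> _]; lia.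
by move: h; rewrite !inE nnM; do 5 (case/orP => [/eqP [_ ->]|]; first lia); move/eqP => [_ ->]; lia.
Qed.

Lemma L1 x y : cn N x y -> cn M x y.
Proof.
have bl := b_lt; have al := a_lt.
have H1 : forall z, z < nn N -> id z < nn M by move=> z zl; rewrite nnM /=; lia.
have H2 : forall x' y', (x', y') \in E N -> x' < nn N -> y' < nn N -> cn M (id x') (id y').
  move=> x' y' h xl yl /=.
  case: (eqVneq (x', y') (a, b)) => [[-> ->]|ne].
    have e1 : cn M a m by apply: cnM_edge; rewrite !inE ?eqxx ?orbT.
    have e2 : cn M m m.+1 by apply: cnM_edge; rewrite !inE ?eqxx ?orbT.
    have e3 : cn M m.+1 b by apply: cnM_edge; rewrite !inE ?eqxx ?orbT.
    exact: cn_trans e1 (cn_trans e2 e3).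
  apply: cn_edge; rewrite ?nnM; try lia.
  by rewrite EM mem_cat (mem_rem_uniq _ (Euniq HOC)); apply/orP; right; rewrite !inE /= ne h.
exact: (cn_map H1 H2).
Qed.

Definition pz (z x : nat) := if x < m then x else z.

Lemma L2 z : cn N a z -> cn N z b -> forall x y, cn M x y -> cn N (pz z x) (pz z y).
Proof.
move=> az zb; have bl := b_lt; have al := a_lt.
have zl : z < m by case: (cn_lt az).
have H1 : forall x, x < nn M -> pz z x < nn N by move=> x _; rewrite /pz; case: ifP.
have f1 : (m.+1 < m) = false by lia.
have f2 : (m.+2 < m) = false by lia.
have f3 : (m.+3 < m) = false by lia.
apply: (cn_map H1); apply: EM_ind; rewrite /pz ?nnM; last first.
  move=> x y h _ _ _; case: (Eall HOC h) => xl yl; rewrite xl yl; exact: cn_edge.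
all: move=> _ _; rewrite ?ltnn ?al ?bl ?f1 ?f2 ?f3 //; exact: cn_refl zl.
Qed.


Lemma pz_old z x : x < m -> pz z x = x. Proof. by rewrite /pz => ->. Qed.
Lemma pz_new z x : m <= x -> pz z x = z. Proof. by rewrite /pz ltnNge => ->. Qed.
Lemma cNaa : cn N a a. Proof. exact: cn_refl a_lt. Qed.
Lemma cNbb : cn N b b. Proof. exact: cn_refl b_lt. Qed.
Lemma cNab : cn N a b. Proof. exact: cn_edge abE a_lt b_lt. Qed.

Lemma cM1 : cn M a m. Proof. by apply: cnM_edge; rewrite !inE ?eqxx ?orbT. Qed.
Lemma cM2 : cn M m m.+1. Proof. by apply: cnM_edge; rewrite !inE ?eqxx ?orbT. Qed.
Lemma cM3 : cn M m.+1 b. Proof. by apply: cnM_edge; rewrite !inE ?eqxx ?orbT. Qed.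
Lemma cM4 : cn M m m.+2. Proof. by apply: cnM_edge; rewrite !inE ?eqxx ?orbT. Qed.
Lemma cM6 : cn M m.+2 m.+3. Proof. by apply: cnM_edge; rewrite !inE ?eqxx ?orbT. Qed.

Lemma cMo x y : x < m -> y < m -> cn M x y = cn N x y.
Proof.
move=> xl yl; apply/idP/idP => [/(L2 cNaa cNab)|/L1 //]; by rewrite !pz_old.
Qed.

Lemma cM_p x : x < m -> cn M x m = cn N x a.
Proof.
move=> xl; apply/idP/idP => [/(L2 cNaa cNab)|/L1 h]; last exact: cn_trans h cM1.
by rewrite (pz_old _ xl) pz_new.
Qed.

Lemma cM_q x : x < m -> cn M x m.+1 = cn N x a.
Proof.
move=> xl; apply/idP/idP => [/(L2 cNaa cNab)|/L1 h]; last exact: cn_trans h (cn_trans cM1 cM2).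
by rewrite (pz_old _ xl) pz_new.
Qed.

Lemma cMp_ y : y < m -> cn M m y = cn N b y.
Proof.
move=> yl; apply/idP/idP => [/(L2 cNab cNbb)|/L1 h]; last exact: cn_trans cM2 (cn_trans cM3 h).
by rewrite (pz_old _ yl) pz_new.
Qed.

Lemma cMq_ y : y < m -> cn M m.+1 y = cn N b y.
Proof.
move=> yl; apply/idP/idP => [/(L2 cNab cNbb)|/L1 h]; last exact: cn_trans cM3 h.
by rewrite (pz_old _ yl) pz_new.
Qed.

Lemma cM_qp : cn M m.+1 m = false.
Proof.
have bl := b_lt; have al := a_lt.
apply/negbTE/negP => c; case: (cn_last c (negbT (gtn_eqF (ltnSn m)))) => z [cz zm].
have za : z = a.
  apply: (EM_ind (P := fun x y => y = m -> x = a) _ _ _ _ _ _ _ zm erefl); try lia.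
  by move=> x y /(Eall HOC) [_ yl] _ e; subst y; move: yl; rewrite ltnn.
subst z; move: cz; rewrite cMq_ // => h; by move: (acyc HOC abE); rewrite h.
Qed.

Lemma cM_r x y : cn M x y -> m.+2 <= x -> m.+2 <= y.
Proof.
have bl := b_lt; have al := a_lt.
apply: cn_closed; apply: EM_ind => //; try lia.
by move=> x' y' /(Eall HOC) [xl _] _; lia.
Qed.

Lemma F1M : F1 M.
Proof.
have al := a_lt; have rl := rt_lt HOC.
move=> v; rewrite nnM rtM => vl.
have ra : cn M (rt N) m by rewrite cM_p // (F1N HOC).
case: (ltnP v m) => [vm|mv]; first by apply: L1; apply: (F1N HOC).
have : (v == m) || (v == m.+1) || (v == m.+2) || (v == m.+3) by lia.
case/orP => [/orP [/orP [/eqP ->|/eqP ->]|/eqP ->]|/eqP ->] //.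
- exact: cn_trans ra cM2.
- exact: cn_trans ra cM4.
- exact: cn_trans ra (cn_trans cM4 cM6).
Qed.

Lemma iotaM : iota 0 (nn M) = iota 0 m ++ [:: m; m.+1; m.+2; m.+3].
Proof. by rewrite nnM -addn4 iotaD add0n. Qed.

Lemma retM_new : [/\ is_ret M m = false, is_ret M m.+1 = false, is_ret M m.+2 & is_ret M m.+3 = false].
Proof. by case: degM_new => [[i1 o1] [i2 o2] [i3 o3] [i4 o4]]; rewrite /is_ret i1 o1 i2 o2 i3 o3 i4 o4. Qed.

Lemma TLM_new : [/\ TL M m, TL M m.+1, TL M m.+2 = false & TL M m.+3].
Proof. by case: degM_new => [[i1 o1] [i2 o2] [i3 o3] [i4 o4]]; rewrite /TL /is_tree /is_leaf i1 o1 i2 o2 i3 o3 i4 o4. Qed.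

Lemma noret_a r : is_ret N r -> cn N r a -> False.
Proof.
move=> hr c; case: (eqVneq r a) => [e|ne]; first by move: a_nret; rewrite -e hr.
case: (ret_reach HOC hr c ne) => _; rewrite /is_leaf => /andP [_ /eqP o].
by move: (outdeg_pos abE); rewrite o.
Qed.

Lemma inCnM_old v : v < m -> inCn M v = inCn N v.
Proof.
move=> vl; have bl := b_lt.
rewrite /inCn TLM_old // iotaM has_cat /=.
case: retM_new => -> -> _ ->; rewrite /= (_ : cn M m.+2 v = false) ?andbF ?orbF; last first.
  by apply/negbTE/negP => h; move: (cM_r h (leqnn _)); lia.
congr (_ && ~~ _); apply: eq_in_has => r; rewrite mem_iota add0n => /andP [_ rl].
by case: (typesM_old rl) => _ _ ->; rewrite cMo.
Qed.

Lemma inCnM_pq : inCn M m /\ inCn M m.+1.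
Proof.
case: TLM_new => t1 t2 _ _; case: retM_new => r1 r2 _ r4.
have n2 : forall y, y < m.+2 -> cn M m.+2 y = false.
  by move=> y yl; apply/negbTE/negP => h; move: (cM_r h (leqnn _)); lia.
split; rewrite /inCn iotaM has_cat /= ?t1 ?t2 r1 r2 r4 n2 // ?andbF ?orbF /=;
  apply/hasPn => r; rewrite mem_iota add0n => /andP [_ rl].
  by case: (typesM_old rl) => _ _ ->; rewrite cM_p //; apply/negP => /and3P [hr _ /(noret_a hr)].
by case: (typesM_old rl) => _ _ ->; rewrite cM_q //; apply/negP => /and3P [hr _ /(noret_a hr)].
Qed.

Lemma inCnM_rl : inCn M m.+2 = false /\ inCn M m.+3 = false.
Proof.
rewrite /inCn; case: TLM_new => _ _ -> ->; split; first by [].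
rewrite andTb; apply: negbF; apply/hasP; exists m.+2; first by rewrite iotaM mem_cat !inE eqxx !orbT.
case: retM_new => _ _ -> _; rewrite cM6 andbT /=; lia.
Qed.

Lemma sum4 (F : nat -> nat) :
  \sum_(0 <= u < m.+4) F u = \sum_(0 <= u < m) F u + F m + F m.+1 + F m.+2 + F m.+3.
Proof. by rewrite !big_nat_recr. Qed.

Lemma KeyM : A_C M =
  \sum_(0 <= v < m) inCn N v * (\sum_(0 <= u < m) ((u != v) && cn N u v) + 2 * cn N b v)
  + 2 * \sum_(0 <= u < m) (cn N u a : nat) + 1.
Proof.
have al := a_lt; have bl := b_lt.
have n2 : forall x y, m.+2 <= x -> y < m.+2 -> cn M x y = false.
  by move=> x y hx yl; apply/negbTE/negP => h; move: (cM_r h hx); lia.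
rewrite (A_CE F1M) nnM sum4.
case: inCnM_rl => -> ->; case: inCnM_pq => -> ->; rewrite !mul0n !addn0 !mul1n.
rewrite !sum4.
have z1 : cn M m.+2 m = false by apply: n2; lia.
have z2 : cn M m.+3 m = false by apply: n2; lia.
have z3 : cn M m.+2 m.+1 = false by apply: n2; lia.
have z4 : cn M m.+3 m.+1 = false by apply: n2; lia.
rewrite z1 z2 z3 z4 cM_qp cM2 !andbF.
have -> : \sum_(0 <= u < m) ((u != m) && cn M u m) = \sum_(0 <= u < m) (cn N u a : nat).
  apply: eq_big_nat => u /andP [_ ul]; rewrite cM_p // (_ : u != m) //; lia.
have -> : \sum_(0 <= u < m) ((u != m.+1) && cn M u m.+1) = \sum_(0 <= u < m) (cn N u a : nat).
  apply: eq_big_nat => u /andP [_ ul]; rewrite cM_q // (_ : u != m.+1) //; lia.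
have -> : \sum_(0 <= v < m) inCn M v * (\sum_(0 <= u < m.+4) ((u != v) && cn M u v)) =
   \sum_(0 <= v < m) inCn N v * (\sum_(0 <= u < m) ((u != v) && cn N u v) + 2 * cn N b v).
  apply: eq_big_nat => v /andP [_ vl]; rewrite inCnM_old //; congr (_ * _).
  rewrite sum4 cMp_ // cMq_ // !n2 ?andbF; try lia.
  have -> : \sum_(0 <= u < m) ((u != v) && cn M u v) = \sum_(0 <= u < m) ((u != v) && cn N u v).
    by apply: eq_big_nat => u /andP [_ ul]; rewrite cMo.
  lia.
lia.
Qed.

End Ext.


Lemma sum_const_seq (T : Type) (s : seq T) c : \sum_(e <- s) c = size s * c.
Proof. elim: s => [|x s IH]; rewrite ?big_nil ?big_cons ?IH //=; lia. Qed.

Theorem mainTheorem6 (k j : nat) (N : net) :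
  1 <= k -> OC k j N ->
  \sum_(e <- ToT N) A_C (extend N (k + j) e)
    = (2 * (k + j) + 3) * A_C N + (2 * (k + j) - 1).
Proof.
move=> k1 HOC.
have AE := A_CE (F1N HOC).
set A := A_C N in AE *.
set al := fun v => \sum_(0 <= u < nn N) ((u != v) && cn N u v).
set X := fun w => \sum_(0 <= v < nn N) inCn N v * cn N w v.
rewrite (eq_big_seq (fun e => A + 2 * X e.2 + 2 * al e.2 + 1)); last first.
  move=> [x y] h; rewrite (KeyM HOC h) (alpha_par HOC h) /= /X /al.
  rewrite (eq_big_nat _ _ (F2 := fun v => inCn N v * \sum_(0 <= u < nn N) ((u != v) && cn N u v)
        + 2 * (inCn N v * cn N y v))); last by move=> v _; rewrite mulnDr mulnCA.
  by rewrite big_split /= -big_distrr /= -AE.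
rewrite !big_split /= !sum_const_seq.
rewrite (sum_ToT HOC X) (sum_ToT HOC al).
have -> : \sum_(0 <= w < nn N) inCn N w * al w = A by rewrite AE.
have -> : \sum_(0 <= w < nn N) inCn N w * X w = A.
  rewrite /X; under eq_bigr do rewrite big_distrr /=.
  rewrite exchange_big /= AE; apply: eq_big_nat => v /andP [_ vl].
  case hv: (inCn N v); last by rewrite mul0n big1 // => w _; rewrite mul0n muln0.
  rewrite mul1n -(inner_C HOC vl hv); apply: eq_bigr => w _; by rewrite mul1n.
rewrite (size_ToT HOC).
nia.
Qed.
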